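(* Let $\kappa>0$, $\nu\in\mathbb R$, and on $\mathbb H$ (the logarithmic chart) let $\delta(z)=4\cot\frac z2-2\nu$ and $\sigma(z)=-2\sqrt\kappa$ (the radial SLE with drift; in the half-plane chart, via $z\mapsto\tan\frac z2$, these are $\delta=2(\frac1z+z)-\nu(1+z^2)$, $\sigma=-\sqrt\kappa(1+z^2)$). Let $$\Gamma_{tw}(z,w)=-\frac12\log\frac{\tan\frac{z-w}4\,\tan\frac{\bar z-\bar w}4}{\tan\frac{\bar z-w}4\,\tan\frac{z-\bar w}4},\qquad z,w\in\mathbb H.$$ Suppose there exist $\mu,\mu^*\in\mathbb C$ and a real-valued $C^2$ function $\eta$ on $\mathbb H$ (the logarithmic-chart representative of a real pre-pre-Schwarzian of order $(\mu,\mu^* )$) such that, for all $z\ne w$ in $\mathbb H$, $$\mathcal{L}_\delta\eta+\tfrac12\mathcal{L}_\sigma^2\eta=0,\qquad \mathcal{L}_\delta\Gamma_{tw}(z,w)+\mathcal{L}_\sigma\eta(z)\,\mathcal{L}_\sigma\eta(w)=0,\qquad \mathcal{L}_\sigma\Gamma_{tw}(z,w)=0.$$ Then $\kappa=4$ and $\nu=0$.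
   Context: The logarithmic chart is related to the unit-disk chart by $z\mapsto e^{iz}$ and to the half-plane chart by $z\mapsto\tan\frac z2$; it is multivalued, and $\Gamma_{tw}$ is $4\pi$-periodic and $2\pi$-antiperiodic in each variable (a Green's function on the double cover of the disk punctured at the radial fixed point). Lie derivatives: $\mathcal{L}_v\eta=v\partial_z\eta+\bar v\partial_{\bar z}\eta+\mu v'+\mu^*\overline{v'}$; for a scalar $\rho$, $\mathcal L_v\rho=v\partial_z\rho+\bar v\partial_{\bar z}\rho$; $\mathcal L^2_\sigma\eta=\mathcal L_\sigma(\mathcal L_\sigma\eta)$ with $\mathcal L_\sigma\eta$ treated as a scalar; $\mathcal{L}_v\Gamma(z,w)=v(z)\partial_z\Gamma+\overline{v(z)}\partial_{\bar z}\Gamma+v(w)\partial_w\Gamma+\overline{v(w)}\partial_{\bar w}\Gamma$. *)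

(* Defs.v *)
From Stdlib Require Import Reals ClassicalEpsilon.
Open Scope R_scope.

Definition Cx := (R * R)%type.
Definition RtoC (r : R) : Cx := (r, 0).
Definition Ci : Cx := (0, 1).
Definition Cadd (a b : Cx) : Cx := (fst a + fst b, snd a + snd b).
Definition Copp (a : Cx) : Cx := (- fst a, - snd a).
Definition Csub (a b : Cx) : Cx := Cadd a (Copp b).
Definition Cmul (a b : Cx) : Cx :=
  (fst a * fst b - snd a * snd b, fst a * snd b + snd a * fst b).
Definition Cconj (a : Cx) : Cx := (fst a, - snd a).
Definition Cnorm2 (a : Cx) : R := fst a ^ 2 + snd a ^ 2.
Definition Cinv (a : Cx) : Cx := (fst a / Cnorm2 a, - snd a / Cnorm2 a).
Definition Cdiv (a b : Cx) : Cx := Cmul a (Cinv b).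
Definition Cmod (a : Cx) : R := sqrt (Cnorm2 a).
Definition Cexp (a : Cx) : Cx := (exp (fst a) * cos (snd a), exp (fst a) * sin (snd a)).
Definition Csin (z : Cx) : Cx :=
  Cdiv (Csub (Cexp (Cmul Ci z)) (Cexp (Copp (Cmul Ci z)))) (Cmul (RtoC 2) Ci).
Definition Ccos (z : Cx) : Cx :=
  Cdiv (Cadd (Cexp (Cmul Ci z)) (Cexp (Copp (Cmul Ci z)))) (RtoC 2).
Definition Ctan (z : Cx) : Cx := Cdiv (Csin z) (Ccos z).
Definition Ccot (z : Cx) : Cx := Cdiv (Ccos z) (Csin z).

Definition inH (z : Cx) : Prop := 0 < snd z.

Definition px (f : R -> R -> R) (x y : R) : R :=
  epsilon (inhabits 0) (fun l => derivable_pt_lim (fun t => f t y) x l).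
Definition py (f : R -> R -> R) (x y : R) : R :=
  epsilon (inhabits 0) (fun l => derivable_pt_lim (fun t => f x t) y l).
Definition has_px (f : R -> R -> R) (x y : R) : Prop :=
  exists l, derivable_pt_lim (fun t => f t y) x l.
Definition has_py (f : R -> R -> R) (x y : R) : Prop :=
  exists l, derivable_pt_lim (fun t => f x t) y l.
Definition cont2_at (f : R -> R -> R) (x y : R) : Prop :=
  forall eps, 0 < eps -> exists d, 0 < d /\
    forall x' y', Rabs (x' - x) < d -> Rabs (y' - y) < d ->
      Rabs (f x' y' - f x y) < eps.

Definition C2_on_H (eta : Cx -> R) : Prop :=
  let f := fun x y => eta (x, y) in
  forall x y, 0 < y ->
    has_px f x y /\ has_py f x y /\
    has_px (px f) x y /\ has_py (px f) x y /\
    has_px (py f) x y /\ has_py (py f) x y /\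
    cont2_at f x y /\ cont2_at (px f) x y /\ cont2_at (py f) x y /\
    cont2_at (px (px f)) x y /\ cont2_at (py (px f)) x y /\
    cont2_at (px (py f)) x y /\ cont2_at (py (py f)) x y.

Definition dxC (F : Cx -> Cx) (z : Cx) : Cx :=
  (px (fun x y => fst (F (x, y))) (fst z) (snd z),
   px (fun x y => snd (F (x, y))) (fst z) (snd z)).
Definition dyC (F : Cx -> Cx) (z : Cx) : Cx :=
  (py (fun x y => fst (F (x, y))) (fst z) (snd z),
   py (fun x y => snd (F (x, y))) (fst z) (snd z)).
Definition dz (F : Cx -> Cx) (z : Cx) : Cx :=
  Cmul (RtoC (/2)) (Csub (dxC F z) (Cmul Ci (dyC F z))).
Definition dzb (F : Cx -> Cx) (z : Cx) : Cx :=
  Cmul (RtoC (/2)) (Cadd (dxC F z) (Cmul Ci (dyC F z))).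

Definition Lsc (v rho : Cx -> Cx) (z : Cx) : Cx :=
  Cadd (Cmul (v z) (dz rho z)) (Cmul (Cconj (v z)) (dzb rho z)).
Definition Lpps (mu mus : Cx) (v : Cx -> Cx) (eta : Cx -> R) (z : Cx) : Cx :=
  Cadd (Lsc v (fun u => RtoC (eta u)) z)
       (Cadd (Cmul mu (dz v z)) (Cmul mus (Cconj (dz v z)))).
(* L_v^2 eta = L_v (L_v eta), the inner one treated as a scalar *)
Definition Lpps2 (mu mus : Cx) (v : Cx -> Cx) (eta : Cx -> R) (z : Cx) : Cx :=
  Lsc v (Lpps mu mus v eta) z.
Definition LGam (v : Cx -> Cx) (G : Cx -> Cx -> R) (z w : Cx) : Cx :=
  Cadd (Lsc v (fun u => RtoC (G u w)) z) (Lsc v (fun u => RtoC (G z u)) w).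

Definition deltaR (nu : R) (z : Cx) : Cx :=
  Csub (Cmul (RtoC 4) (Ccot (Cdiv z (RtoC 2)))) (RtoC (2 * nu)).
Definition sigmaR (kappa : R) (z : Cx) : Cx := RtoC (-2 * sqrt kappa).

(* The argument of log is a positive real number (a quotient of squared moduli),
   so log is taken as ln of its modulus. *)
Definition Gamma_tw (z w : Cx) : R :=
  let q4 := fun a => Ctan (Cdiv a (RtoC 4)) in
  - / 2 * ln (Cmod (Cdiv (Cmul (q4 (Csub z w)) (q4 (Csub (Cconj z) (Cconj w))))
                         (Cmul (q4 (Csub (Cconj z) w)) (q4 (Csub z (Cconj w)))))).

(* Main.v *)
From Coquelicot Require Import Rcomplements Rbar Hierarchy Derive AutoDerive Derive_2d Continuity.
Require Import Defs.
From Stdlib Require Import Reals ClassicalEpsilon Lra FunctionalExtensionality.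
Open Scope R_scope.

Lemma px_of f x y l : is_derive (fun t => f t y) x l -> px f x y = l.
Proof.
  intro H. apply is_derive_Reals in H. unfold px.
  apply (uniqueness_limite (fun t => f t y) x).
  - apply (epsilon_spec (inhabits 0) (fun l => derivable_pt_lim (fun t => f t y) x l)). exists l; exact H.
  - exact H.
Qed.
Lemma py_of f x y l : is_derive (fun t => f x t) y l -> py f x y = l.
Proof.
  intro H. apply is_derive_Reals in H. unfold py.
  apply (uniqueness_limite (fun t => f x t) y).
  - apply (epsilon_spec (inhabits 0) (fun l => derivable_pt_lim (fun t => f x t) y l)). exists l; exact H.
  - exact H.
Qed.
Lemma px_cst (c : R) x y : px (fun _ _ => c) x y = 0.
Proof. apply px_of. auto_derive; try easy; ring. Qed.
Lemma py_cst (c : R) x y : py (fun _ _ => c) x y = 0.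
Proof. apply py_of. auto_derive; try easy; ring. Qed.

Definition chf t := (exp t + exp (- t)) / 2.
Definition shf t := (exp t - exp (- t)) / 2.

Lemma Cmul_Ci u v : Cmul Ci (u, v) = (- v, u).
Proof. unfold Cmul, Ci; simpl; f_equal; ring. Qed.

Lemma Csin_form u v : Csin (u, v) = (sin u * chf v, cos u * shf v).
Proof.
  unfold Csin. rewrite Cmul_Ci.
  unfold Cdiv, Csub, Cadd, Copp, Cexp, Cmul, Cinv, Cnorm2, RtoC, Ci, chf, shf; simpl.
  rewrite Ropp_involutive, cos_neg, sin_neg. f_equal; field.
Qed.
Lemma Ccos_form u v : Ccos (u, v) = (cos u * chf v, - (sin u * shf v)).
Proof.
  unfold Ccos. rewrite Cmul_Ci.
  unfold Cdiv, Csub, Cadd, Copp, Cexp, Cmul, Cinv, Cnorm2, RtoC, Ci, chf, shf; simpl.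
  rewrite Ropp_involutive, cos_neg, sin_neg. f_equal; field.
Qed.
Lemma Cdiv_2 x y : Cdiv (x, y) (RtoC 2) = (x / 2, y / 2).
Proof. unfold Cdiv, Cmul, Cinv, Cnorm2, RtoC; simpl; f_equal; field. Qed.
Lemma Cdiv_4 x y : Cdiv (x, y) (RtoC 4) = (x / 4, y / 4).
Proof. unfold Cdiv, Cmul, Cinv, Cnorm2, RtoC; simpl; f_equal; field. Qed.

Lemma Cnorm2_mul p q : Cnorm2 (Cmul p q) = Cnorm2 p * Cnorm2 q.
Proof. destruct p, q; unfold Cnorm2, Cmul; simpl; ring. Qed.
Lemma Cnorm2_div p q : Cnorm2 q <> 0 -> Cnorm2 (Cdiv p q) = Cnorm2 p / Cnorm2 q.
Proof. destruct p as [a b], q as [c d]; unfold Cdiv, Cnorm2, Cmul, Cinv, Cnorm2; cbn [fst snd]. intro H. field. exact H. Qed.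

Lemma exp_mopp t : exp t * exp (- t) = 1.
Proof. rewrite <- exp_plus. replace (t + - t) with 0 by ring. apply exp_0. Qed.

Lemma chf2 t : chf (2 * t) = chf t * chf t + shf t * shf t.
Proof.
  unfold chf, shf. replace (2 * t) with (t + t) by ring. replace (- (t + t)) with (- t + - t) by ring.
  rewrite !exp_plus. pose proof (exp_mopp t). nra.
Qed.
Lemma ch2_sh2 t : chf t * chf t - shf t * shf t = 1.
Proof. unfold chf, shf. pose proof (exp_mopp t). nra. Qed.

Lemma Cn_sin u v : Cnorm2 (Csin (u, v)) = (chf (2 * v) - cos (2 * u)) / 2.
Proof.
  rewrite Csin_form. unfold Cnorm2; simpl. rewrite chf2, cos_2a.
  pose proof (sin2_cos2 u) as H1. pose proof (ch2_sh2 v) as H2. unfold Rsqr in H1. nra.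
Qed.
Lemma Cn_cos u v : Cnorm2 (Ccos (u, v)) = (chf (2 * v) + cos (2 * u)) / 2.
Proof.
  rewrite Ccos_form. unfold Cnorm2; simpl. rewrite chf2, cos_2a.
  pose proof (sin2_cos2 u) as H1. pose proof (ch2_sh2 v) as H2. unfold Rsqr in H1. nra.
Qed.

Lemma chf_neg t : chf (- t) = chf t.
Proof. unfold chf. rewrite Ropp_involutive. field. Qed.
Lemma shf_neg t : shf (- t) = - shf t.
Proof. unfold shf. rewrite Ropp_involutive. field. Qed.
Lemma chf_gt1 t : t <> 0 -> 1 < chf t.
Proof.
  intro H. unfold chf. pose proof (exp_mopp t) as Hinv. pose proof (exp_pos t). pose proof (exp_pos (-t)).
  assert (exp t <> 1).
  { intro E1. apply H. rewrite <- (ln_exp t), E1. apply ln_1. }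
  assert (0 < (exp t - 1) * (exp t - 1)). { apply (Rsqr_pos_lt (exp t - 1)). lra. }
  assert (H7 : 0 < (exp t + exp (-t) - 2) * exp t).
  { replace ((exp t + exp (-t) - 2) * exp t) with ((exp t - 1) * (exp t - 1) + (exp t * exp (-t) - 1)) by ring.
    rewrite Hinv. lra. }
  assert (0 < exp t + exp (-t) - 2).
  { destruct (Rlt_or_le 0 (exp t + exp (-t) - 2)) as [h|h]; auto. nra. }
  lra.
Qed.
Lemma chf_ge1 t : 1 <= chf t.
Proof.
  destruct (Req_dec t 0) as [->|h].
  - unfold chf. rewrite Ropp_0, exp_0. lra.
  - left. apply chf_gt1. exact h.
Qed.

Lemma Cn_tan4 p q : chf (q/2) + cos (p/2) <> 0 ->
  Cnorm2 (Ctan (Cdiv (p, q) (RtoC 4))) = (chf (q/2) - cos (p/2)) / (chf (q/2) + cos (p/2)).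
Proof.
  intro H. rewrite Cdiv_4. unfold Ctan. rewrite Cnorm2_div, Cn_sin, Cn_cos.
  - replace (2 * (q/4)) with (q/2) by field. replace (2 * (p/4)) with (p/2) by field. field. exact H.
  - rewrite Cn_cos. replace (2 * (q/4)) with (q/2) by field. replace (2 * (p/4)) with (p/2) by field.
    lra.
Qed.

Definition GT x y x0 y0 :=
  - / 2 * ln ((chf ((y - y0)/2) - cos ((x - x0)/2)) * (chf ((y + y0)/2) + cos ((x - x0)/2))
              / ((chf ((y - y0)/2) + cos ((x - x0)/2)) * (chf ((y + y0)/2) - cos ((x - x0)/2)))).

Lemma Gamma_form x y x0 y0 : 0 < y -> 0 < y0 -> y <> y0 -> Gamma_tw (x, y) (x0, y0) = GT x y x0 y0.
Proof.
  intros Hy Hy0 Hne.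
  assert (Ha : 1 < chf ((y - y0)/2)) by (apply chf_gt1; intro; apply Hne; lra).
  assert (Hb : 1 < chf ((y + y0)/2)) by (apply chf_gt1; lra).
  pose proof (COS_bound ((x - x0)/2)) as Hc.
  unfold Gamma_tw, GT. cbv zeta.
  unfold Csub, Cadd, Copp, Cconj. cbn [fst snd].
  assert (E1 : (- y + - - y0) / 2 = - ((y - y0)/2)) by field.
  assert (E2 : (- y + - y0) / 2 = - ((y + y0)/2)) by field.
  assert (E3 : (y + - - y0) / 2 = (y + y0)/2) by field.
  assert (E4 : (y + - y0) / 2 = (y - y0)/2) by field.
  assert (E5 : (x + - x0) / 2 = (x - x0)/2) by field.
  unfold Cmod. rewrite Cnorm2_div, !Cnorm2_mul, !Cn_tan4; rewrite ?E1, ?E2, ?E3, ?E4, ?E5, ?chf_neg; try lra.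
  2:{ rewrite !Cnorm2_mul, !Cn_tan4; rewrite ?E1, ?E2, ?E3, ?E4, ?E5, ?chf_neg; try lra.
      apply Rgt_not_eq. apply Rmult_gt_0_compat; apply Rdiv_lt_0_compat; lra. }
  set (a := chf ((y - y0)/2)) in *. set (b := chf ((y + y0)/2)) in *. set (c := cos ((x - x0)/2)) in *.
  f_equal. f_equal.
  replace ((a - c) / (a + c) * ((a - c) / (a + c)) / ((b - c) / (b + c) * ((b - c) / (b + c))))
    with (((a - c) * (b + c) / ((a + c) * (b - c))) * ((a - c) * (b + c) / ((a + c) * (b - c)))).
  - apply sqrt_square. apply Rlt_le. apply Rdiv_lt_0_compat; apply Rmult_lt_0_compat; lra.
  - field. repeat split; lra.
Qed.

Definition y0c := 2 * ln 3.
Definition cc x := cos (x / 2).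
Definition ss x := sin (x / 2).
Definition hh y := chf (y / 2).
Definition kk y := shf (y / 2).
Definition aa y := chf ((y - y0c) / 2).
Definition AA y := shf ((y - y0c) / 2).
Definition bb y := chf ((y + y0c) / 2).
Definition BB y := shf ((y + y0c) / 2).

Lemma is_cc x : is_derive cc x (- ss x / 2).
Proof. unfold cc, ss. auto_derive; auto. unfold Rminus, Rdiv. field. Qed.
Lemma is_ss x : is_derive ss x (cc x / 2).
Proof. unfold cc, ss. auto_derive; auto. unfold Rminus, Rdiv. field. Qed.
Lemma is_hh x : is_derive hh x (kk x / 2).
Proof. unfold hh, kk, chf, shf. auto_derive; auto. unfold Rminus, Rdiv. field. Qed.
Lemma is_kk x : is_derive kk x (hh x / 2).
Proof. unfold hh, kk, chf, shf. auto_derive; auto. unfold Rminus, Rdiv. field. Qed.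
Lemma is_aa x : is_derive aa x (AA x / 2).
Proof. unfold aa, AA, chf, shf. auto_derive; auto. unfold Rminus, Rdiv. field. Qed.
Lemma is_AA x : is_derive AA x (aa x / 2).
Proof. unfold aa, AA, chf, shf. auto_derive; auto. unfold Rminus, Rdiv. field. Qed.
Lemma is_bb x : is_derive bb x (BB x / 2).
Proof. unfold bb, BB, chf, shf. auto_derive; auto. unfold Rminus, Rdiv. field. Qed.
Lemma is_BB x : is_derive BB x (bb x / 2).
Proof. unfold bb, BB, chf, shf. auto_derive; auto. unfold Rminus, Rdiv. field. Qed.

Lemma D_cc x : Derive (fun t => cc t) x = - ss x / 2. Proof. apply is_derive_unique, is_cc. Qed.
Lemma D_ss x : Derive (fun t => ss t) x = cc x / 2. Proof. apply is_derive_unique, is_ss. Qed.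
Lemma D_hh x : Derive (fun t => hh t) x = kk x / 2. Proof. apply is_derive_unique, is_hh. Qed.
Lemma D_kk x : Derive (fun t => kk t) x = hh x / 2. Proof. apply is_derive_unique, is_kk. Qed.
Lemma D_aa x : Derive (fun t => aa t) x = AA x / 2. Proof. apply is_derive_unique, is_aa. Qed.
Lemma D_AA x : Derive (fun t => AA t) x = aa x / 2. Proof. apply is_derive_unique, is_AA. Qed.
Lemma D_bb x : Derive (fun t => bb t) x = BB x / 2. Proof. apply is_derive_unique, is_bb. Qed.
Lemma D_BB x : Derive (fun t => BB t) x = bb x / 2. Proof. apply is_derive_unique, is_BB. Qed.
Lemma ex_cc x : ex_derive (fun t => cc t) x. Proof. eexists; apply is_cc. Qed.
Lemma ex_ss x : ex_derive (fun t => ss t) x. Proof. eexists; apply is_ss. Qed.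
Lemma ex_hh x : ex_derive (fun t => hh t) x. Proof. eexists; apply is_hh. Qed.
Lemma ex_kk x : ex_derive (fun t => kk t) x. Proof. eexists; apply is_kk. Qed.
Lemma ex_aa x : ex_derive (fun t => aa t) x. Proof. eexists; apply is_aa. Qed.
Lemma ex_AA x : ex_derive (fun t => AA t) x. Proof. eexists; apply is_AA. Qed.
Lemma ex_bb x : ex_derive (fun t => bb t) x. Proof. eexists; apply is_bb. Qed.
Lemma ex_BB x : ex_derive (fun t => BB t) x. Proof. eexists; apply is_BB. Qed.

Ltac base_rw := rewrite ?D_cc, ?D_ss, ?D_hh, ?D_kk, ?D_aa, ?D_AA, ?D_bb, ?D_BB.
Ltac solve_ex := first [ apply ex_cc | apply ex_ss | apply ex_hh | apply ex_kk | apply ex_aa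
                       | apply ex_AA | apply ex_bb | apply ex_BB | exact I ].

Lemma cs1 x : ss x * ss x + cc x * cc x = 1.
Proof. unfold ss, cc. pose proof (sin2_cos2 (x/2)). unfold Rsqr in H. lra. Qed.
Lemma hk1 y : hh y * hh y - kk y * kk y = 1.
Proof. apply ch2_sh2. Qed.
Lemma kk_nz y : y <> 0 -> kk y <> 0.
Proof.
  intros H E. unfold kk, shf in E. assert (exp (y/2) = exp (- (y/2))) by lra.
  apply exp_inv in H0. apply H. lra.
Qed.
Lemma hh_pos y : 0 < hh y.
Proof. unfold hh. pose proof (chf_ge1 (y/2)). lra. Qed.

Definition Nf x y := (ss x * hh y) ^ 2 + (cc x * kk y) ^ 2.
Lemma Nf_pos x y : y <> 0 -> 0 < Nf x y.
Proof.
  intro H. unfold Nf. pose proof (cs1 x). pose proof (hk1 y). pose proof (kk_nz y H).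
  assert (0 < kk y * kk y) by (apply (Rsqr_pos_lt (kk y)); auto).
  nra.
Qed.

Definition Un x y := cc x * hh y * (ss x * hh y) - ss x * kk y * (cc x * kk y).
Definition Vn x y := - (cc x * hh y * (cc x * kk y) + ss x * kk y * (ss x * hh y)).
Definition Pf x y := Un x y * / Nf x y.
Definition Qf x y := Vn x y * / Nf x y.

Lemma delta_form nu x y : deltaR nu (x, y) = (4 * Pf x y - 2 * nu, 4 * Qf x y).
Proof.
  unfold deltaR, Ccot. rewrite Cdiv_2, Csin_form, Ccos_form.
  unfold Csub, Cadd, Copp, Cmul, Cdiv, Cinv, Cnorm2, RtoC; cbn [fst snd].
  unfold Pf, Qf, Un, Vn, Nf, cc, ss, hh, kk. unfold Cmul; cbn [fst snd]. unfold Rdiv, Rminus. f_equal; ring.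
Qed.

Definition Unx x y := (- ss x / 2) * hh y * (ss x * hh y) + cc x * hh y * ((cc x / 2) * hh y)
   - ((cc x / 2) * kk y * (cc x * kk y) + ss x * kk y * ((- ss x / 2) * kk y)).
Definition Uny x y := cc x * (kk y / 2) * (ss x * hh y) + cc x * hh y * (ss x * (kk y / 2))
   - (ss x * (hh y / 2) * (cc x * kk y) + ss x * kk y * (cc x * (hh y / 2))).
Definition Nfx x y := 2 * (ss x * hh y) * ((cc x / 2) * hh y) + 2 * (cc x * kk y) * ((- ss x / 2) * kk y).
Definition Nfy x y := 2 * (ss x * hh y) * (ss x * (kk y / 2)) + 2 * (cc x * kk y) * (cc x * (hh y / 2)).
Definition Vnx x y := - ((- ss x / 2) * hh y * (cc x * kk y) + cc x * hh y * ((- ss x / 2) * kk y)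
   + (cc x / 2) * kk y * (ss x * hh y) + ss x * kk y * ((cc x / 2) * hh y)).
Definition Vny x y := - (cc x * (kk y / 2) * (cc x * kk y) + cc x * hh y * (cc x * (hh y / 2))
   + ss x * (hh y / 2) * (ss x * hh y) + ss x * kk y * (ss x * (kk y / 2))).
Definition Pxf x y := (Unx x y * Nf x y - Un x y * Nfx x y) / (Nf x y) ^ 2.
Definition Pyf x y := (Uny x y * Nf x y - Un x y * Nfy x y) / (Nf x y) ^ 2.
Definition Qxf x y := (Vnx x y * Nf x y - Vn x y * Nfx x y) / (Nf x y) ^ 2.
Definition Qyf x y := (Vny x y * Nf x y - Vn x y * Nfy x y) / (Nf x y) ^ 2.

Ltac nfz x y := match goal with |- ?e <> 0 => replace e with (Nf x y) by (unfold Nf; ring); apply Rgt_not_eq; apply Nf_pos; assumption end.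

Ltac dtac x y := auto_derive; [ repeat split; try solve_ex; try nfz x y
   | base_rw; unfold Rdiv, Rminus; field; try nfz x y ].

Lemma is_Px x y : y <> 0 -> is_derive (fun t => Pf t y) x (Pxf x y).
Proof. intro H. unfold Pf, Pxf, Un, Unx, Nf, Nfx. dtac x y. Qed.
Lemma is_Qx x y : y <> 0 -> is_derive (fun t => Qf t y) x (Qxf x y).
Proof. intro H. unfold Qf, Qxf, Vn, Vnx, Nf, Nfx. dtac x y. Qed.
Lemma is_Py x y : y <> 0 -> is_derive (fun t => Pf x t) y (Pyf x y).
Proof. intro H. unfold Pf, Pyf, Un, Uny, Nf, Nfy. dtac x y. Qed.
Lemma is_Qy x y : y <> 0 -> is_derive (fun t => Qf x t) y (Qyf x y).
Proof. intro H. unfold Qf, Qyf, Vn, Vny, Nf, Nfy. dtac x y. Qed.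

Lemma is_chf t : is_derive chf t (shf t).
Proof. unfold chf, shf. auto_derive; auto. unfold Rminus, Rdiv. field. Qed.
Lemma D_chf t : Derive (fun u => chf u) t = shf t. Proof. apply is_derive_unique, is_chf. Qed.
Lemma ex_chf t : ex_derive (fun u => chf u) t. Proof. eexists; apply is_chf. Qed.

Lemma y0c_pos : 0 < y0c.
Proof. unfold y0c. pose proof (ln_lt_2 ). assert (0 < ln 3). { rewrite <- ln_1. apply ln_increasing; lra. } lra. Qed.

Definition al x y := / (aa y - cc x) - / (aa y + cc x).
Definition alp x y := / (aa y - cc x) + / (aa y + cc x).
Definition be x y := / (bb y - cc x) - / (bb y + cc x).
Definition bep x y := / (bb y - cc x) + / (bb y + cc x).
Definition Gxf x y := - (ss x / 4) * (alp x y - bep x y).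
Definition Gyf x y := - / 4 * (AA y * al x y - BB y * be x y).
Definition Gx0f x y := (ss x / 4) * (alp x y - bep x y).
Definition Gy0f x y := / 4 * (AA y * al x y + BB y * be x y).

Lemma GT_base x y : GT x y 0 y0c = - / 2 * ln ((aa y - cc x) * (bb y + cc x) / ((aa y + cc x) * (bb y - cc x))).
Proof. unfold GT, aa, bb, cc. rewrite Rminus_0_r. reflexivity. Qed.

Lemma bnd x y : 0 < y -> y <> y0c ->
  1 < aa y /\ 1 < bb y /\ -1 <= cc x <= 1.
Proof.
  intros Hy Hne. pose proof y0c_pos. split; [|split].
  - unfold aa. apply chf_gt1. intro. apply Hne. lra.
  - unfold bb. apply chf_gt1. lra.
  - unfold cc. apply COS_bound.
Qed.

Ltac pos_tac := repeat (apply Rmult_lt_0_compat || apply Rinv_0_lt_compat); lra.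
Ltac nz_tac := match goal with
  | |- _ <> 0 => apply Rgt_not_eq; unfold Rgt; pos_tac
  | |- 0 < _ => pos_tac
  | _ => idtac end.
Ltac gtac := auto_derive; [ repeat split; try solve_ex; try apply ex_chf; nz_tac
   | base_rw; rewrite ?D_chf; unfold Rdiv, Rminus; field; repeat split; nz_tac ].

Lemma is_Gx x y : 0 < y -> y <> y0c -> is_derive (fun t => GT t y 0 y0c) x (Gxf x y).
Proof.
  intros Hy Hne. destruct (bnd x y Hy Hne) as [Ha [Hb Hc]].
  eapply is_derive_ext. { intro t. symmetry. apply GT_base. }
  unfold Gxf, alp, bep. gtac.
Qed.
Lemma is_Gy x y : 0 < y -> y <> y0c -> is_derive (fun t => GT x t 0 y0c) y (Gyf x y).
Proof.
  intros Hy Hne. destruct (bnd x y Hy Hne) as [Ha [Hb Hc]].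
  eapply is_derive_ext. { intro t. symmetry. apply GT_base. }
  unfold Gyf, al, be. gtac.
Qed.
Lemma is_Gx0 x y : 0 < y -> y <> y0c -> is_derive (fun t => GT x y t y0c) 0 (Gx0f x y).
Proof.
  intros Hy Hne. destruct (bnd x y Hy Hne) as [Ha [Hb Hc]].
  unfold Gx0f, alp, bep, al, be, GT. unfold aa, bb, cc, ss in *. auto_derive.
  all: rewrite ?Ropp_0, ?Rplus_0_r; unfold Rdiv, Rminus in *.
  - repeat split; nz_tac.
  - field. repeat split; nz_tac.
Qed.
Lemma is_Gy0 x y : 0 < y -> y <> y0c -> is_derive (fun t => GT x y 0 t) y0c (Gy0f x y).
Proof.
  intros Hy Hne. destruct (bnd x y Hy Hne) as [Ha [Hb Hc]].
  unfold Gy0f, al, be, GT. unfold aa, bb, cc, AA, BB in *. auto_derive.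
  all: try replace (x + - 0) with x by ring; try replace (x - 0) with x by ring.
  all: unfold sinh, shf, Rdiv, Rminus in *.
  - repeat split; try apply ex_chf; nz_tac.
  - field. repeat split; nz_tac.
Qed.

Lemma locally_R x (P : R -> Prop) d : 0 < d -> (forall t, Rabs (t - x) < d -> P t) -> locally x P.
Proof.
  intros Hd H. exists (mkposreal d Hd). intros t Ht. apply H. exact Ht.
Qed.

Lemma Lsc_real v (G : Cx -> R) z :
  fst (Lsc v (fun u => RtoC (G u)) z) =
  fst (v z) * px (fun a b => G (a, b)) (fst z) (snd z) + snd (v z) * py (fun a b => G (a, b)) (fst z) (snd z).
Proof.
  unfold Lsc, dz, dzb, dxC, dyC, Cmul, Cadd, Csub, Copp, Cconj, RtoC, Ci; cbn [fst snd].
  unfold Cadd; cbn [fst snd].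
  rewrite !px_cst, !py_cst. field.
Qed.

Lemma LGam_real v G z w :
  fst (LGam v G z w) =
    fst (v z) * px (fun a b => G (a, b) w) (fst z) (snd z) + snd (v z) * py (fun a b => G (a, b) w) (fst z) (snd z)
  + (fst (v w) * px (fun a b => G z (a, b)) (fst w) (snd w) + snd (v w) * py (fun a b => G z (a, b)) (fst w) (snd w)).
Proof. unfold LGam, Cadd. cbn [fst]. rewrite !Lsc_real. reflexivity. Qed.

Definition ef (eta : Cx -> R) := fun a b => eta (a, b).

Lemma Lpps_sig mu mus kappa eta z :
  Lpps mu mus (sigmaR kappa) eta z = (-2 * sqrt kappa * px (ef eta) (fst z) (snd z), 0).
Proof.
  unfold Lpps, Lsc, dz, dzb, dxC, dyC, sigmaR, Cmul, Cadd, Csub, Copp, Cconj, RtoC, Ci; cbn [fst snd].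
  unfold Cmul, Cadd; cbn [fst snd].
  rewrite !px_cst, !py_cst. unfold ef. f_equal; field.
Qed.

Lemma px_has f x y : has_px f x y -> is_derive (fun t => f t y) x (px f x y).
Proof. intros [l Hl]. apply is_derive_Reals in Hl. rewrite (px_of f x y l Hl). exact Hl. Qed.
Lemma py_has f x y : has_py f x y -> is_derive (fun t => f x t) y (py f x y).
Proof. intros [l Hl]. apply is_derive_Reals in Hl. rewrite (py_of f x y l Hl). exact Hl. Qed.

Lemma px_scal f c x y : has_px f x y -> px (fun a b => c * f a b) x y = c * px f x y.
Proof. intro H. apply px_of. apply is_derive_scal. apply px_has, H. Qed.

Lemma Lpps2_sig mu mus kappa eta x y : has_px (px (ef eta)) x y ->
  fst (Lpps2 mu mus (sigmaR kappa) eta (x, y)) = (-2 * sqrt kappa) * ((-2 * sqrt kappa) * px (px (ef eta)) x y).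
Proof.
  intro H. unfold Lpps2.
  assert (E : Lpps mu mus (sigmaR kappa) eta = fun u => (-2 * sqrt kappa * px (ef eta) (fst u) (snd u), 0)).
  { apply functional_extensionality. intro u. apply Lpps_sig. }
  rewrite E. unfold Lsc, dz, dzb, dxC, dyC, sigmaR, Cmul, Cadd, Csub, Copp, Cconj, RtoC, Ci; cbn [fst snd].
  unfold Cmul, Cadd; cbn [fst snd].
  rewrite !px_cst, !py_cst. rewrite px_scal by exact H. field.
Qed.

Lemma D_Px x y : y <> 0 -> Derive (fun t => Pf t y) x = Pxf x y. Proof. intro; apply is_derive_unique, is_Px; auto. Qed.
Lemma D_Qx x y : y <> 0 -> Derive (fun t => Qf t y) x = Qxf x y. Proof. intro; apply is_derive_unique, is_Qx; auto. Qed.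
Lemma D_Py x y : y <> 0 -> Derive (fun t => Pf x t) y = Pyf x y. Proof. intro; apply is_derive_unique, is_Py; auto. Qed.
Lemma D_Qy x y : y <> 0 -> Derive (fun t => Qf x t) y = Qyf x y. Proof. intro; apply is_derive_unique, is_Qy; auto. Qed.
Lemma ex_Px x y : y <> 0 -> ex_derive (fun t => Pf t y) x. Proof. intro; eexists; apply is_Px; auto. Qed.
Lemma ex_Qx x y : y <> 0 -> ex_derive (fun t => Qf t y) x. Proof. intro; eexists; apply is_Qx; auto. Qed.
Lemma ex_Py x y : y <> 0 -> ex_derive (fun t => Pf x t) y. Proof. intro; eexists; apply is_Py; auto. Qed.
Lemma ex_Qy x y : y <> 0 -> ex_derive (fun t => Qf x t) y. Proof. intro; eexists; apply is_Qy; auto. Qed.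

Lemma dz_delta nu x y : y <> 0 ->
  dz (deltaR nu) (x, y) = (/ 2 * (4 * Pxf x y + 4 * Qyf x y), / 2 * (4 * Qxf x y - 4 * Pyf x y)).
Proof.
  intro Hy.
  assert (E1 : px (fun a b => fst (deltaR nu (a, b))) x y = 4 * Pxf x y).
  { apply px_of. eapply is_derive_ext. { intro t. rewrite delta_form. reflexivity. }
    cbn [fst]. auto_derive. apply ex_Px; auto. rewrite D_Px; auto. ring. }
  assert (E2 : px (fun a b => snd (deltaR nu (a, b))) x y = 4 * Qxf x y).
  { apply px_of. eapply is_derive_ext. { intro t. rewrite delta_form. reflexivity. }
    cbn [snd]. auto_derive. apply ex_Qx; auto. rewrite D_Qx; auto. ring. }
  assert (E3 : py (fun a b => fst (deltaR nu (a, b))) x y = 4 * Pyf x y).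
  { apply py_of. eapply is_derive_ext. { intro t. rewrite delta_form. reflexivity. }
    cbn [fst]. auto_derive. apply ex_Py; auto. rewrite D_Py; auto. ring. }
  assert (E4 : py (fun a b => snd (deltaR nu (a, b))) x y = 4 * Qyf x y).
  { apply py_of. eapply is_derive_ext. { intro t. rewrite delta_form. reflexivity. }
    cbn [snd]. auto_derive. apply ex_Qy; auto. rewrite D_Qy; auto. ring. }
  unfold dz, dxC, dyC. cbn [fst snd]. rewrite E1, E2, E3, E4.
  unfold Cmul, Csub, Cadd, Copp, RtoC, Ci; cbn [fst snd]. f_equal; field.
Qed.

Ltac close_lin H := unfold ef in *; match goal with |- ?G = 0 => match type of H with ?E = 0 =>
  let HH := fresh in assert (HH : G = E) by field; rewrite HH; exact H end end.

Lemma eq1_red kappa nu mu mus eta x y : 0 < kappa -> 0 < y -> has_px (px (ef eta)) x y ->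
  Cadd (Lpps mu mus (deltaR nu) eta (x, y)) (Cmul (RtoC (/2)) (Lpps2 mu mus (sigmaR kappa) eta (x, y))) = RtoC 0 ->
  (4 * Pf x y - 2 * nu) * px (ef eta) x y + 4 * Qf x y * py (ef eta) x y
  + (fst mu + fst mus) * (2 * (Pxf x y + Qyf x y)) + (snd mus - snd mu) * (2 * (Qxf x y - Pyf x y))
  + 2 * kappa * px (px (ef eta)) x y = 0.
Proof.
  intros Hk Hy Hh H. apply (f_equal fst) in H. unfold RtoC at 2 in H. cbn [fst] in H.
  unfold Cadd at 1 in H; cbn [fst] in H. unfold Lpps at 1 in H.
  unfold Cadd at 1 in H; cbn [fst] in H. rewrite Lsc_real in H. cbn [fst snd] in H.
  unfold Cadd at 1 in H; cbn [fst] in H.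
  rewrite dz_delta, delta_form in H by lra.
  unfold Cmul at 3 in H. cbn [fst snd] in H. rewrite Lpps2_sig in H by exact Hh.
  unfold Cmul, Cconj, RtoC in H. cbn [fst snd] in H. unfold ef.
  replace kappa with (sqrt kappa * sqrt kappa) by (apply sqrt_sqrt; lra).
  close_lin H.
Qed.

Lemma near_ne y y' : y <> y' -> 0 < y -> exists d, 0 < d /\ forall t, Rabs (t - y) < d -> 0 < t /\ t <> y'.
Proof.
  intros Hne Hy. exists (Rmin y (Rabs (y - y'))). split.
  - apply Rmin_pos; auto. apply Rabs_pos_lt. lra.
  - intros t Ht. pose proof (Rmin_l y (Rabs (y - y'))). pose proof (Rmin_r y (Rabs (y - y'))).
    split.
    + apply Rabs_def2 in Ht. lra.
    + intro E. subst t. rewrite Rabs_minus_sym in Ht. lra.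
Qed.

Lemma pxG x y : 0 < y -> y <> y0c -> px (fun a b => Gamma_tw (a, b) (0, y0c)) x y = Gxf x y.
Proof.
  intros Hy Hne. pose proof y0c_pos. apply px_of. eapply is_derive_ext.
  { intro t. symmetry. apply Gamma_form; auto. } apply is_Gx; auto.
Qed.
Lemma pyG x y : 0 < y -> y <> y0c -> py (fun a b => Gamma_tw (a, b) (0, y0c)) x y = Gyf x y.
Proof.
  intros Hy Hne. pose proof y0c_pos. apply py_of.
  destruct (near_ne y y0c Hne Hy) as [d [Hd Hn]].
  eapply is_derive_ext_loc.
  { apply (locally_R y _ d Hd). intros t Ht. destruct (Hn t Ht). symmetry. apply Gamma_form; auto. }
  apply is_Gy; auto.
Qed.
Lemma pxG0 x y : 0 < y -> y <> y0c -> px (fun a b => Gamma_tw (x, y) (a, b)) 0 y0c = Gx0f x y.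
Proof.
  intros Hy Hne. pose proof y0c_pos. apply px_of. eapply is_derive_ext.
  { intro t. symmetry. apply Gamma_form; auto. } apply is_Gx0; auto.
Qed.
Lemma pyG0 x y : 0 < y -> y <> y0c -> py (fun a b => Gamma_tw (x, y) (a, b)) 0 y0c = Gy0f x y.
Proof.
  intros Hy Hne. pose proof y0c_pos as H0. apply py_of.
  destruct (near_ne y0c y (not_eq_sym Hne) H0) as [d [Hd Hn]].
  eapply is_derive_ext_loc.
  { apply (locally_R y0c _ d Hd). intros t Ht. destruct (Hn t Ht). symmetry. apply Gamma_form; auto. }
  apply is_Gy0; auto.
Qed.

Definition Ff x y := 4 * Pf x y * Gxf x y + 4 * Qf x y * Gyf x y + 4 * Qf 0 y0c * Gy0f x y.

Lemma ss0 : ss 0 = 0. Proof. unfold ss. replace (0/2) with 0 by field. apply sin_0. Qed.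
Lemma cc0 : cc 0 = 1. Proof. unfold cc. replace (0/2) with 0 by field. apply cos_0. Qed.
Lemma Pf0 y : Pf 0 y = 0. Proof. unfold Pf, Un. rewrite ss0. ring. Qed.

Lemma eq2_red kappa nu mu mus eta x y : 0 < kappa -> 0 < y -> y <> y0c ->
  Cadd (LGam (deltaR nu) Gamma_tw (x, y) (0, y0c))
       (Cmul (Lpps mu mus (sigmaR kappa) eta (x, y)) (Lpps mu mus (sigmaR kappa) eta (0, y0c))) = RtoC 0 ->
  Ff x y + 4 * kappa * (px (ef eta) x y * px (ef eta) 0 y0c) = 0.
Proof.
  intros Hk Hy Hne H. apply (f_equal fst) in H. unfold RtoC at 1 in H. cbn [fst] in H.
  unfold Cadd at 1 in H; cbn [fst] in H. rewrite LGam_real in H. cbn [fst snd] in H.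
  rewrite !delta_form in H. cbn [fst snd] in H.
  rewrite pxG, pyG, pxG0, pyG0 in H by auto.
  rewrite !Lpps_sig in H. unfold Cmul in H. cbn [fst snd] in H.
  rewrite Pf0 in H. unfold Ff.
  replace kappa with (sqrt kappa * sqrt kappa) by (apply sqrt_sqrt; lra).
  assert (Gx0f x y = - Gxf x y) as E by (unfold Gx0f, Gxf; ring). rewrite E in H.
  close_lin H.
Qed.

Lemma Dx_eq f u v : has_px f u v -> Derive (fun t => f t v) u = px f u v.
Proof. intro H. apply is_derive_unique, px_has, H. Qed.
Lemma Dy_eq f u v : has_py f u v -> Derive (fun t => f u t) v = py f u v.
Proof. intro H. apply is_derive_unique, py_has, H. Qed.



Lemma C2 eta (HC : C2_on_H eta) u v : 0 < v ->
    has_px (ef eta) u v /\ has_py (ef eta) u v /\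
    has_px (px (ef eta)) u v /\ has_py (px (ef eta)) u v /\
    has_px (py (ef eta)) u v /\ has_py (py (ef eta)) u v /\
    cont2_at (ef eta) u v /\ cont2_at (px (ef eta)) u v /\ cont2_at (py (ef eta)) u v /\
    cont2_at (px (px (ef eta))) u v /\ cont2_at (py (px (ef eta))) u v /\
    cont2_at (px (py (ef eta))) u v /\ cont2_at (py (py (ef eta))) u v.
Proof. intro Hv. exact (HC u v Hv). Qed.

Lemma L_left eta (HC : C2_on_H eta) u v : 0 < v -> Derive (fun z => Derive (fun t => (ef eta) z t) v) u = px (py (ef eta)) u v.
Proof.
  intro Hv. rewrite (Derive_ext _ (fun z => py (ef eta) z v)).
  - apply Dx_eq. apply (C2 eta HC u v Hv).
  - intro z. apply Dy_eq. apply (C2 eta HC z v Hv).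
Qed.
Lemma L_right eta (HC : C2_on_H eta) u v : 0 < v -> Derive (fun z => Derive (fun t => (ef eta) t z) u) v = py (px (ef eta)) u v.
Proof.
  intro Hv. rewrite (Derive_ext_loc _ (fun z => px (ef eta) u z)).
  - apply Dy_eq. apply (C2 eta HC u v Hv).
  - apply (locally_R v _ v Hv). intros z Hz. apply Rabs_def2 in Hz. apply Dx_eq. apply (C2 eta HC u z). lra.
Qed.

Lemma schwarz_eq eta (HC : C2_on_H eta) x y : 0 < y -> px (py (ef eta)) x y = py (px (ef eta)) x y.
Proof.
  intro Hy. rewrite <- (L_left eta HC), <- (L_right eta HC) by auto.
  assert (Hy2 : 0 < y / 2) by lra.
  apply Schwarz.
  - exists (mkposreal _ Hy2). intros u v Hu Hv. simpl in Hu, Hv. apply Rabs_def2 in Hv.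
    assert (0 < v) by lra. destruct (C2 eta HC u v H) as (h1 & h2 & h3 & h4 & h5 & _).
    split; [|split; [|split]].
    + eexists. apply px_has, h1.
    + eexists. apply py_has, h2.
    + eapply ex_derive_ext. { intro z. symmetry. apply Dy_eq. apply (C2 eta HC z v H). }
      eexists. apply px_has, h5.
    + eapply ex_derive_ext_loc.
      { apply (locally_R v _ v H). intros z Hz. apply Rabs_def2 in Hz. symmetry. apply Dx_eq. apply (C2 eta HC u z). lra. }
      eexists. apply py_has, h4.
  - intro eps. destruct (C2 eta HC x y Hy) as (_ & _ & _ & _ & _ & _ & _ & _ & _ & _ & _ & hc & _).
    destruct (hc eps (cond_pos eps)) as [d [Hd Hc]].
    assert (Hm : 0 < Rmin d (y/2)) by (apply Rmin_pos; lra).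
    exists (mkposreal _ Hm). intros u v Hu Hv. simpl in Hu, Hv.
    pose proof (Rmin_l d (y/2)). pose proof (Rmin_r d (y/2)).
    assert (0 < v) by (apply Rabs_def2 in Hv; lra).
    rewrite !(L_left eta HC) by auto. apply Hc; lra.
  - intro eps. destruct (C2 eta HC x y Hy) as (_ & _ & _ & _ & _ & _ & _ & _ & _ & _ & hc & _).
    destruct (hc eps (cond_pos eps)) as [d [Hd Hc]].
    assert (Hm : 0 < Rmin d (y/2)) by (apply Rmin_pos; lra).
    exists (mkposreal _ Hm). intros u v Hu Hv. simpl in Hu, Hv.
    pose proof (Rmin_l d (y/2)). pose proof (Rmin_r d (y/2)).
    assert (0 < v) by (apply Rabs_def2 in Hv; lra).
    rewrite !(L_right eta HC) by auto. apply Hc; lra.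
Qed.


Definition alx x y := (- ss x / 2) / (aa y - cc x) ^ 2 + (- ss x / 2) / (aa y + cc x) ^ 2.
Definition alpx x y := (- ss x / 2) / (aa y - cc x) ^ 2 - (- ss x / 2) / (aa y + cc x) ^ 2.
Definition bex x y := (- ss x / 2) / (bb y - cc x) ^ 2 + (- ss x / 2) / (bb y + cc x) ^ 2.
Definition bepx x y := (- ss x / 2) / (bb y - cc x) ^ 2 - (- ss x / 2) / (bb y + cc x) ^ 2.
Definition Gxxf x y := - (cc x / 8) * (alp x y - bep x y) - (ss x / 4) * (alpx x y - bepx x y).
Definition Gyxf x y := - / 4 * (AA y * alx x y - BB y * bex x y).
Definition Gy0xf x y := / 4 * (AA y * alx x y + BB y * bex x y).
Definition F1f x y := 4 * Pxf x y * Gxf x y + 4 * Pf x y * Gxxf x y + 4 * Qxf x y * Gyf x y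
  + 4 * Qf x y * Gyxf x y + 4 * Qf 0 y0c * Gy0xf x y.

Ltac gdt Hy Hne x y := destruct (bnd x y Hy Hne) as [Ha [Hb Hc]]; auto_derive;
  [ repeat split; try solve_ex; nz_tac
  | base_rw; unfold alx, alpx, bex, bepx, al, alp, be, bep; unfold Rdiv, Rminus; field; repeat split; nz_tac ].

Lemma is_Gxx x y : 0 < y -> y <> y0c -> is_derive (fun t => Gxf t y) x (Gxxf x y).
Proof. intros Hy Hne. unfold Gxf, Gxxf, alp, bep. gdt Hy Hne x y. Qed.
Lemma is_Gyx x y : 0 < y -> y <> y0c -> is_derive (fun t => Gyf t y) x (Gyxf x y).
Proof. intros Hy Hne. unfold Gyf, Gyxf, al, be. gdt Hy Hne x y. Qed.
Lemma is_Gy0x x y : 0 < y -> y <> y0c -> is_derive (fun t => Gy0f t y) x (Gy0xf x y).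
Proof. intros Hy Hne. unfold Gy0f, Gy0xf, al, be. gdt Hy Hne x y. Qed.
Lemma D_Gxx x y : 0 < y -> y <> y0c -> Derive (fun t => Gxf t y) x = Gxxf x y.
Proof. intros; apply is_derive_unique, is_Gxx; auto. Qed.
Lemma D_Gyx x y : 0 < y -> y <> y0c -> Derive (fun t => Gyf t y) x = Gyxf x y.
Proof. intros; apply is_derive_unique, is_Gyx; auto. Qed.
Lemma D_Gy0x x y : 0 < y -> y <> y0c -> Derive (fun t => Gy0f t y) x = Gy0xf x y.
Proof. intros; apply is_derive_unique, is_Gy0x; auto. Qed.
Lemma is_F1 x y : 0 < y -> y <> y0c -> is_derive (fun t => Ff t y) x (F1f x y).
Proof.
  intros Hy Hne. assert (y <> 0) by lra.
  unfold Ff. auto_derive.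
  - split. apply ex_Px; auto. split. eexists; apply (is_Gxx x y); auto.
    split. apply ex_Qx; auto. split. eexists; apply (is_Gyx x y); auto.
    split. eexists; apply (is_Gy0x x y); auto. exact I.
  - rewrite D_Px, D_Qx by auto.
    rewrite D_Gxx, D_Gyx, D_Gy0x by auto.
    unfold F1f. ring.
Qed.
Lemma D_F1 x y : 0 < y -> y <> y0c -> Derive (fun t => Ff t y) x = F1f x y.
Proof. intros; apply is_derive_unique, is_F1; auto. Qed.

Lemma chf_ln u : 0 < u -> chf (ln u) = (u + / u) / 2.
Proof. intro H. unfold chf. rewrite exp_Ropp, exp_ln; auto. Qed.
Lemma shf_ln u : 0 < u -> shf (ln u) = (u - / u) / 2.
Proof. intro H. unfold shf. rewrite exp_Ropp, exp_ln; auto. Qed.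

Lemma hh_v E : 0 < E -> hh (2 * ln E) = (E + / E) / 2.
Proof. intro H. unfold hh. replace (2 * ln E / 2) with (ln E) by field. apply chf_ln; auto. Qed.
Lemma kk_v E : 0 < E -> kk (2 * ln E) = (E - / E) / 2.
Proof. intro H. unfold kk. replace (2 * ln E / 2) with (ln E) by field. apply shf_ln; auto. Qed.
Lemma aa_v E : 0 < E -> aa (2 * ln E) = (E / 3 + / (E / 3)) / 2.
Proof. intro H. unfold aa, y0c. assert (EE : (2 * ln E - 2 * ln 3) / 2 = ln (E / 3)) by (rewrite ln_div; try lra; field).
  rewrite EE. apply chf_ln. lra. Qed.
Lemma AA_v E : 0 < E -> AA (2 * ln E) = (E / 3 - / (E / 3)) / 2.
Proof. intro H. unfold AA, y0c. assert (EE : (2 * ln E - 2 * ln 3) / 2 = ln (E / 3)) by (rewrite ln_div; try lra; field).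
  rewrite EE. apply shf_ln. lra. Qed.
Lemma bb_v E : 0 < E -> bb (2 * ln E) = (E * 3 + / (E * 3)) / 2.
Proof. intro H. unfold bb, y0c. assert (EE : (2 * ln E + 2 * ln 3) / 2 = ln (E * 3)) by (rewrite ln_mult; try lra; field).
  rewrite EE. apply chf_ln. lra. Qed.
Lemma BB_v E : 0 < E -> BB (2 * ln E) = (E * 3 - / (E * 3)) / 2.
Proof. intro H. unfold BB, y0c. assert (EE : (2 * ln E + 2 * ln 3) / 2 = ln (E * 3)) by (rewrite ln_mult; try lra; field).
  rewrite EE. apply shf_ln. lra. Qed.
Lemma ccPI : cc PI = 0. Proof. unfold cc. apply cos_PI2. Qed.
Lemma ssPI : ss PI = 1. Proof. unfold ss. apply sin_PI2. Qed.

Lemma Q0v : Qf 0 y0c = - 5 / 4.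
Proof. unfold Qf, Vn, Nf, y0c. rewrite cc0, ss0, hh_v, kk_v by lra. field. Qed.

Ltac vals := rewrite ?cc0, ?ss0, ?ccPI, ?ssPI, ?Q0v, ?hh_v, ?kk_v, ?aa_v, ?AA_v, ?bb_v, ?BB_v by lra.

Ltac numz := match goal with |- ?e <> 0 => let HH := fresh in intro HH; field_simplify in HH; lra end.
Lemma tstP : is_derive (fun t => Pyf t (2 * ln 2)) 0 (-40/27).
Proof.
  unfold Pyf, Uny, Un, Nf, Nfy. auto_derive.
  - repeat split; try solve_ex. all: vals. numz.
  - base_rw. vals. field.
Qed.

Lemma kk_pos y : 0 < y -> 0 < kk y.
Proof.
  intro H. unfold kk, shf. assert (exp (- (y/2)) < exp (y/2)) by (apply exp_increasing; lra). lra.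
Qed.
Lemma Qf_neg x y : 0 < y -> Qf x y < 0.
Proof.
  intro H. unfold Qf, Vn. pose proof (Nf_pos x y ltac:(lra)). pose proof (cs1 x). pose proof (kk_pos y H).
  pose proof (hh_pos y).
  assert (Vn x y = - (hh y * kk y)) as E.
  { unfold Vn. replace (- (cc x * hh y * (cc x * kk y) + ss x * kk y * (ss x * hh y))) with (- (hh y * kk y) * (ss x * ss x + cc x * cc x)) by ring. rewrite cs1. ring. }
  unfold Vn in E. rewrite E.
  assert (0 < hh y * kk y) by (apply Rmult_lt_0_compat; auto).
  assert (0 < / Nf x y) by (apply Rinv_0_lt_compat; auto). nra.
Qed.

Definition Wf kappa nu U V k y t :=
  - (((4 * Pf t y - 2 * nu) * (k * Ff t y) + U * (2 * (Pxf t y + Qyf t y)) + V * (2 * (Qxf t y - Pyf t y))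
      + 2 * kappa * (k * F1f t y)) / (4 * Qf t y)).

Lemma key eta kappa nu mu mus k x1 y1 (HC : C2_on_H eta) (Hk : 0 < kappa) (Hy : 0 < y1) (Hne : y1 <> y0c)
  (Hex : forall x y, 0 < y -> y <> y0c -> px (ef eta) x y = k * Ff x y)
  (H1 : forall z, inH z ->
       Cadd (Lpps mu mus (deltaR nu) eta z)
            (Cmul (RtoC (/2)) (Lpps2 mu mus (sigmaR kappa) eta z)) = RtoC 0)
  vP vQ vPx vPy vQx vQy vF vF1 dPx dPy dQx dQy dF1 dFy
  (EP : Pf x1 y1 = vP) (EQ : Qf x1 y1 = vQ) (EPx : Pxf x1 y1 = vPx) (EPy : Pyf x1 y1 = vPy)
  (EQx : Qxf x1 y1 = vQx) (EQy : Qyf x1 y1 = vQy) (EF : Ff x1 y1 = vF) (EF1 : F1f x1 y1 = vF1)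
  (DPx : is_derive (fun t => Pxf t y1) x1 dPx) (DPy : is_derive (fun t => Pyf t y1) x1 dPy)
  (DQx : is_derive (fun t => Qxf t y1) x1 dQx) (DQy : is_derive (fun t => Qyf t y1) x1 dQy)
  (DF1 : is_derive (fun t => F1f t y1) x1 dF1) (DFy : is_derive (fun t => Ff x1 t) y1 dFy) :
  let U := fst mu + fst mus in let V := snd mus - snd mu in
  k * dFy = - ((4 * vPx * (k * vF) + (4 * vP - 2 * nu) * (k * vF1) + U * (2 * (dPx + dQy))
                + V * (2 * (dQx - dPy)) + 2 * kappa * (k * dF1)) * (4 * vQ)
              - ((4 * vP - 2 * nu) * (k * vF) + U * (2 * (vPx + vQy)) + V * (2 * (vQx - vPy))
                + 2 * kappa * (k * vF1)) * (4 * vQx)) / ((4 * vQ) * (4 * vQ)).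
Proof.
  intros U V.
  assert (Hy0 : y1 <> 0) by lra.
  assert (Ha : forall t, px (ef eta) t y1 = k * Ff t y1) by (intro t; apply Hex; auto).
  assert (Hb : forall t, px (px (ef eta)) t y1 = k * F1f t y1).
  { intro t. apply px_of. eapply is_derive_ext. { intro u. symmetry. apply Ha. }
    apply is_derive_scal. apply is_F1; auto. }
  assert (Hc : forall t, py (ef eta) t y1 = Wf kappa nu U V k y1 t).
  { intro t. pose proof (eq1_red kappa nu mu mus eta t y1 Hk Hy) as R.
    assert (Hh : has_px (px (ef eta)) t y1) by (apply (C2 eta HC t y1 Hy)).
    specialize (R Hh (H1 (t, y1) Hy)). rewrite Ha, Hb in R.
    pose proof (Qf_neg t y1 Hy). unfold Wf. fold U V.
    apply (Rmult_eq_reg_l (4 * Qf t y1)); [| lra].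
    match goal with |- _ = _ * (- (?N / _)) => replace (4 * Qf t y1 * (- (N / (4 * Qf t y1)))) with (- N) by (field; lra) end.
    unfold U, V. lra. }
  assert (Hd : px (py (ef eta)) x1 y1 = - ((4 * vPx * (k * vF) + (4 * vP - 2 * nu) * (k * vF1) + U * (2 * (dPx + dQy))
                + V * (2 * (dQx - dPy)) + 2 * kappa * (k * dF1)) * (4 * vQ)
              - ((4 * vP - 2 * nu) * (k * vF) + U * (2 * (vPx + vQy)) + V * (2 * (vQx - vPy))
                + 2 * kappa * (k * vF1)) * (4 * vQx)) / ((4 * vQ) * (4 * vQ))).
  { apply px_of. eapply is_derive_ext. { intro t. symmetry. apply Hc. }
    pose proof (Qf_neg x1 y1 Hy) as HQ. rewrite EQ in HQ.
    unfold Wf. auto_derive.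
    - repeat split; match goal with
        | |- ex_derive (fun _ => Pf _ _) _ => apply ex_Px; auto
        | |- ex_derive (fun _ => Qf _ _) _ => apply ex_Qx; auto
        | |- ex_derive (fun _ => Ff _ _) _ => eexists; apply (is_F1 x1 y1); auto
        | |- ex_derive (fun _ => Pxf _ _) _ => exists dPx; exact DPx
        | |- ex_derive (fun _ => Pyf _ _) _ => exists dPy; exact DPy
        | |- ex_derive (fun _ => Qxf _ _) _ => exists dQx; exact DQx
        | |- ex_derive (fun _ => Qyf _ _) _ => exists dQy; exact DQy
        | |- ex_derive (fun _ => F1f _ _) _ => exists dF1; exact DF1
        | |- True => exact I
        | |- _ => rewrite EQ; lra end.
    - rewrite D_Px, D_Qx, D_F1 by auto.
      assert (R1 : Derive (fun t : R => Pxf t y1) x1 = dPx) by (apply is_derive_unique; exact DPx).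
      assert (R2 : Derive (fun t : R => Pyf t y1) x1 = dPy) by (apply is_derive_unique; exact DPy).
      assert (R3 : Derive (fun t : R => Qxf t y1) x1 = dQx) by (apply is_derive_unique; exact DQx).
      assert (R4 : Derive (fun t : R => Qyf t y1) x1 = dQy) by (apply is_derive_unique; exact DQy).
      assert (R5 : Derive (fun t : R => F1f t y1) x1 = dF1) by (apply is_derive_unique; exact DF1).
      rewrite R1, R2, R3, R4, R5.
      rewrite EP, EQ, EPx, EPy, EQx, EQy, EF, EF1. field. lra. }
  assert (He : py (px (ef eta)) x1 y1 = k * dFy).
  { apply py_of. destruct (near_ne y1 y0c Hne Hy) as [d [Hd0 Hn]].
    eapply is_derive_ext_loc.
    { apply (locally_R y1 _ d Hd0). intros t Ht. destruct (Hn t Ht). symmetry. apply Hex; auto. }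
    apply is_derive_scal. exact DFy. }
  rewrite <- He, <- Hd. symmetry. apply schwarz_eq; auto.
Qed.

Ltac ua := unfold Ff, F1f; rewrite ?Q0v; unfold Gxf, Gyf, Gy0f, Gxxf, Gyxf, Gy0xf, al, alp, be, bep, alx, alpx, bex, bepx,
  Pf, Qf, Pxf, Pyf, Qxf, Qyf, Un, Vn, Unx, Uny, Vnx, Vny, Nf, Nfx, Nfy.
Ltac numv := ua; vals; field; repeat split; try numz.
Ltac numd := ua; auto_derive; [ repeat split; try solve_ex; vals; try numz | base_rw; vals; field; repeat split; try numz ].

Lemma A_P : Pf 0 (2 * ln 2) = 0.
Proof. numv. Qed.
Lemma A_Q : Qf 0 (2 * ln 2) = -5/3.
Proof. numv. Qed.
Lemma A_Px : Pxf 0 (2 * ln 2) = 8/9.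
Proof. numv. Qed.
Lemma A_Py : Pyf 0 (2 * ln 2) = 0.
Proof. numv. Qed.
Lemma A_Qx : Qxf 0 (2 * ln 2) = 0.
Proof. numv. Qed.
Lemma A_Qy : Qyf 0 (2 * ln 2) = 8/9.
Proof. numv. Qed.
Lemma A_F : Ff 0 (2 * ln 2) = -4.
Proof. numv. Qed.
Lemma A_F1 : F1f 0 (2 * ln 2) = 0.
Proof. numv. Qed.
Lemma A_dPx : is_derive (fun t => Pxf t (2 * ln 2)) 0 (0).
Proof. numd. Qed.
Lemma A_dPy : is_derive (fun t => Pyf t (2 * ln 2)) 0 (-40/27).
Proof. numd. Qed.
Lemma A_dQx : is_derive (fun t => Qxf t (2 * ln 2)) 0 (40/27).
Proof. numd. Qed.
Lemma A_dQy : is_derive (fun t => Qyf t (2 * ln 2)) 0 (0).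
Proof. numd. Qed.
Lemma A_dF1 : is_derive (fun t => F1f t (2 * ln 2)) 0 (41/9).
Proof. numd. Qed.
Lemma A_Fy : is_derive (fun t => Ff 0 t) (2 * ln 2) (10/3).
Proof. numd. Qed.
Lemma B_P : Pf PI (2 * ln 2) = 0.
Proof. numv. Qed.
Lemma B_Q : Qf PI (2 * ln 2) = -3/5.
Proof. numv. Qed.
Lemma B_Px : Pxf PI (2 * ln 2) = -8/25.
Proof. numv. Qed.
Lemma B_Py : Pyf PI (2 * ln 2) = 0.
Proof. numv. Qed.
Lemma B_Qx : Qxf PI (2 * ln 2) = 0.
Proof. numv. Qed.
Lemma B_Qy : Qyf PI (2 * ln 2) = -8/25.
Proof. numv. Qed.
Lemma B_F : Ff PI (2 * ln 2) = 0.
Proof. numv. Qed.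
Lemma B_F1 : F1f PI (2 * ln 2) = 18/25.
Proof. numv. Qed.
Lemma B_dPx : is_derive (fun t => Pxf t (2 * ln 2)) PI (0).
Proof. numd. Qed.
Lemma B_dPy : is_derive (fun t => Pyf t (2 * ln 2)) PI (24/125).
Proof. numd. Qed.
Lemma B_dQx : is_derive (fun t => Qxf t (2 * ln 2)) PI (-24/125).
Proof. numd. Qed.
Lemma B_dQy : is_derive (fun t => Qyf t (2 * ln 2)) PI (0).
Proof. numd. Qed.
Lemma B_dF1 : is_derive (fun t => F1f t (2 * ln 2)) PI (0).
Proof. numd. Qed.
Lemma B_Fy : is_derive (fun t => Ff PI t) (2 * ln 2) (0).
Proof. numd. Qed.
Lemma C_P : Pf PI (2 * ln 4) = 0.
Proof. numv. Qed.
Lemma C_Q : Qf PI (2 * ln 4) = -15/17.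
Proof. numv. Qed.
Lemma C_Px : Pxf PI (2 * ln 4) = -32/289.
Proof. numv. Qed.
Lemma C_Py : Pyf PI (2 * ln 4) = 0.
Proof. numv. Qed.
Lemma C_Qx : Qxf PI (2 * ln 4) = 0.
Proof. numv. Qed.
Lemma C_Qy : Qyf PI (2 * ln 4) = -32/289.
Proof. numv. Qed.
Lemma C_F : Ff PI (2 * ln 4) = 0.
Proof. numv. Qed.
Lemma C_F1 : F1f PI (2 * ln 4) = 180/289.
Proof. numv. Qed.
Lemma C_dPx : is_derive (fun t => Pxf t (2 * ln 4)) PI (0).
Proof. numd. Qed.
Lemma C_dPy : is_derive (fun t => Pyf t (2 * ln 4)) PI (480/4913).
Proof. numd. Qed.
Lemma C_dQx : is_derive (fun t => Qxf t (2 * ln 4)) PI (-480/4913).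
Proof. numd. Qed.
Lemma C_dQy : is_derive (fun t => Qyf t (2 * ln 4)) PI (0).
Proof. numd. Qed.
Lemma C_dF1 : is_derive (fun t => F1f t (2 * ln 4)) PI (0).
Proof. numd. Qed.
Lemma C_Fy : is_derive (fun t => Ff PI t) (2 * ln 4) (0).
Proof. numd. Qed.

Lemma ln_pos_y E : 1 < E -> 0 < 2 * ln E.
Proof. intro H. assert (0 < ln E) by (rewrite <- ln_1; apply ln_increasing; lra). lra. Qed.
Lemma y_ne E : 0 < E -> E <> 3 -> 2 * ln E <> y0c.
Proof. intros H H3 Heq. unfold y0c in Heq. apply H3. apply ln_inv; lra. Qed.

Theorem proposition6p1 :
  forall (kappa nu : R), 0 < kappa ->
  forall (mu mus : Cx) (eta : Cx -> R),
    C2_on_H eta ->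
    (forall z, inH z ->
       Cadd (Lpps mu mus (deltaR nu) eta z)
            (Cmul (RtoC (/2)) (Lpps2 mu mus (sigmaR kappa) eta z)) = RtoC 0) ->
    (forall z w, inH z -> inH w -> (forall k : Z, Csub z w <> RtoC (2 * PI * IZR k)) ->
       Cadd (LGam (deltaR nu) Gamma_tw z w)
            (Cmul (Lpps mu mus (sigmaR kappa) eta z) (Lpps mu mus (sigmaR kappa) eta w))
       = RtoC 0) ->
    (forall z w, inH z -> inH w -> (forall k : Z, Csub z w <> RtoC (2 * PI * IZR k)) ->
       LGam (sigmaR kappa) Gamma_tw z w = RtoC 0) ->
    kappa = 4 /\ nu = 0.
Proof.
  intros kappa nu Hk mu mus eta HC H1 H2 _.
  pose proof y0c_pos as Hy0.
  assert (Hred : forall x y, 0 < y -> y <> y0c ->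
            Ff x y + 4 * kappa * (px (ef eta) x y * px (ef eta) 0 y0c) = 0).
  { intros x y Hy Hne. apply (eq2_red kappa nu mu mus eta x y Hk Hy Hne).
    apply H2; unfold inH; cbn [snd]; auto.
    intros kz E. apply (f_equal snd) in E. unfold Csub, Cadd, Copp, RtoC in E. cbn [fst snd] in E.
    apply Hne. lra. }
  set (e0 := px (ef eta) 0 y0c) in *.
  assert (He0 : e0 <> 0).
  { intro Z0. pose proof (Hred 0 (2 * ln 2) (ln_pos_y 2 ltac:(lra)) (y_ne 2 ltac:(lra) ltac:(lra))) as R.
    rewrite A_F, Z0 in R. lra. }
  set (k := - / (4 * kappa * e0)).
  assert (Hex : forall x y, 0 < y -> y <> y0c -> px (ef eta) x y = k * Ff x y).
  { intros x y Hy Hne. pose proof (Hred x y Hy Hne) as R. unfold k.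
    apply (Rmult_eq_reg_l (4 * kappa * e0)). 2:{ apply Rmult_integral_contrapositive; split; lra. }
    field_simplify; try lra. }
  assert (Hkn : k <> 0).
  { unfold k. apply Ropp_neq_0_compat. apply Rinv_neq_0_compat. apply Rmult_integral_contrapositive; split; lra. }
  pose proof (key eta kappa nu mu mus k 0 (2 * ln 2) HC Hk (ln_pos_y 2 ltac:(lra)) (y_ne 2 ltac:(lra) ltac:(lra))
    Hex H1 _ _ _ _ _ _ _ _ _ _ _ _ _ _ A_P A_Q A_Px A_Py A_Qx A_Qy A_F A_F1 A_dPx A_dPy A_dQx A_dQy A_dF1 A_Fy) as KA.
  pose proof (key eta kappa nu mu mus k PI (2 * ln 2) HC Hk (ln_pos_y 2 ltac:(lra)) (y_ne 2 ltac:(lra) ltac:(lra))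
    Hex H1 _ _ _ _ _ _ _ _ _ _ _ _ _ _ B_P B_Q B_Px B_Py B_Qx B_Qy B_F B_F1 B_dPx B_dPy B_dQx B_dQy B_dF1 B_Fy) as KB.
  pose proof (key eta kappa nu mu mus k PI (2 * ln 4) HC Hk (ln_pos_y 4 ltac:(lra)) (y_ne 4 ltac:(lra) ltac:(lra))
    Hex H1 _ _ _ _ _ _ _ _ _ _ _ _ _ _ C_P C_Q C_Px C_Py C_Qx C_Qy C_F C_F1 C_dPx C_dPy C_dQx C_dQy C_dF1 C_Fy) as KC.
  cbv zeta in KA, KB, KC.
  set (V := snd mus - snd mu) in *. set (U := fst mu + fst mus) in *.
  assert (EA : -384 * k + 160 * V + 246 * (kappa * k) = 600 * k) by (field_simplify in KA; lra).
  assert (EB : 180 * (nu * k) + 96 * V = 0) by (field_simplify in KB; lra).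
  assert (EC : 6120 * (nu * k) + 1920 * V = 0) by (field_simplify in KC; lra).
  assert (Hw : nu * k = 0) by lra.
  split.
  - assert (k * (246 * kappa - 984) = 0) by lra.
    apply Rmult_integral in H. destruct H; [contradiction | lra].
  - apply Rmult_integral in Hw. destruct Hw; [auto | contradiction].
Qed.
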